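(* Let $H=(V,E)$ be a $k$-uniform hypergraph and $U\subseteq V$ such that every edge of the projected hypergraph $H[U]$ has size at most two. Then, over the polynomial ring over $\mathrm{GF}(2^m)$ (any $m\geq1$) in the variables $s$ and $\{v_e\}_{e\in E}$, $$\det(\mathbf{T}^{(s)}(H,U))=\sum_{M\in\mathcal{M}}s^{\Lambda(M)}\prod_{e\in M}v_e^{p(e)},$$ where $\mathcal{M}$ is the set of all perfect matchings of $H[U]$, $\Lambda(M)$ is the number of loops in $M$, and $p(e)=1$ if $e$ is a loop and $p(e)=2$ otherwise.
   Context: A hypergraph $H=(V,E)$ has a finite vertex set $V$ and a multiset $E$ of subsets of $V$; $k$-uniform means all edges have size $k$. For $U\subseteq V$, the projected hypergraph $H[U]$ has one edge $e\cap U$ for each $e\in E$. An edge $e$ is a loop (at $i$) if $e\cap U=\{i\}$. Each $e\in E$ has a variable $v_e$. The Tutte matrix of index $s$, $\mathbf{T}^{(s)}(H,U)$, is the $|U|\times|U|$ matrix with rows and columns indexed by $U$, with $\mathbf{T}_{i,j}=\sum v_e$ over all $e\in E$ with $e\cap U=\{i,j\}$ for $i\neq j$, and $\mathbf{T}_{i,i}=s\sum v_e$ over all $e\in E$ with $e\cap U=\{i\}$. A perfect matching of $H[U]$ is a set $M\subseteq E$ of edges (multiset occurrences distinct) with nonempty projections on $U$ that are pairwise disjoint and cover $U$; a loop covers its single vertex. *)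

(* Defs.v *)
From HB Require Import structures.
From mathcomp Require Import all_boot all_order all_algebra all_field.
From mathcomp Require Import mpoly.
Set Implicit Arguments. Unset Strict Implicit. Unset Printing Implicit Defensive.
Import GRing.Theory.
Local Open Scope ring_scope.

(* A hypergraph H = (V, E): vertices form the finite type V, the edge multiset
   is given by a finite index type E of edge occurrences and a map
   edge : E -> {set V} (so repeated edges are distinct occurrences). *)

Section Tutte.
Variables (F : comNzRingType) (V E : finType) (edge : E -> {set V}) (U : {set V}).

Definition nvars := #|E|.+1.
Definition var_s : {mpoly F[nvars]} := 'X_ord0.
Definition var_v (e : E) : {mpoly F[nvars]} := 'X_(lift ord0 (enum_rank e)).

Definition proj (e : E) : {set V} := edge e :&: U.
Definition is_loop (e : E) : bool := #|proj e| == 1%N.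

Definition uvert (i : 'I_#|U|) : V := enum_val i.

Definition tutte_matrix : 'M[{mpoly F[nvars]}]_#|U| :=
  \matrix_(i, j)
    if i != j then \sum_(e : E | proj e == [set uvert i; uvert j]) var_v e
    else var_s * \sum_(e : E | proj e == [set uvert i]) var_v e.

Definition perfect_matching (M : {set E}) : bool :=
  [&& [forall e in M, proj e != set0],
      [forall e1 in M, forall e2 in M, (e1 != e2) ==> [disjoint proj e1 & proj e2]]
    & \bigcup_(e in M) proj e == U].

Definition nloops (M : {set E}) : nat := #|[set e in M | is_loop e]|.
Definition pexp (e : E) : nat := if is_loop e then 1%N else 2%N.

End Tutte.

(* Main.v *)
Require Import Defs.
From HB Require Import structures.
From mathcomp Require Import all_boot all_order all_algebra all_field.
From mathcomp Require Import mpoly.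
From mathcomp Require Import fingroup perm.
Import GRing.Theory.
Local Open Scope ring_scope.

Lemma sum_cancel2 (R : nzRingType) (T : finType) (g : T -> T) (P : pred T) (F : T -> R) :
  (2%:R : R) = 0 ->
  (forall x, P x -> P (g x)) -> (forall x, P x -> g (g x) = x) ->
  (forall x, P x -> g x != x) -> (forall x, P x -> F (g x) = F x) ->
  \sum_(x | P x) F x = 0.
Proof.
move=> h2 Pg gg gx Fg.
have rne x : P x -> enum_rank x != enum_rank (g x).
  move=> Px; apply/negP => /eqP/enum_rank_inj E1.
  by move: (gx _ Px); rewrite -E1 eqxx.
rewrite (bigID (fun x => enum_rank x < enum_rank (g x))%N) /=.
set S := \sum_(i | _ && _) F i.
have -> : \sum_(i | P i && ~~ (enum_rank i < enum_rank (g i))%N) F i = S.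
  rewrite (reindex_onto g g); last first.
    by move=> x /andP[Px _]; rewrite gg.
  apply: eq_big => x.
    apply/idP/idP.
      case/andP=> /andP[Pgx hn] /eqP Ex.
      have Px : P x by rewrite -Ex; apply: Pg.
      rewrite Px /=; move: hn; rewrite Ex -leqNgt leq_eqVlt.
      by case/orP=> // /eqP/val_inj E1; move: (rne _ Px); rewrite E1 eqxx.
    case/andP=> Px hl; have Pgx := Pg _ Px.
    by rewrite Pgx gg // eqxx andbT -leqNgt ltnW.
  case/andP=> /andP[Pgx _] /eqP Ex. by rewrite -{2}Ex (Fg (g x)).
have -> : S + S = S * 2%:R by rewrite mulr_natr mulr2n.
by rewrite h2 mulr0.
Qed.

Section Main.
Variables (F : comNzRingType) (V E : finType) (edge : E -> {set V}) (U : {set V}).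
Hypothesis char2 : (2%:R : {mpoly F[nvars E]}) = 0.
Hypothesis small : forall e, (#|proj edge U e| <= 2)%N.
Local Notation n := #|U|.
Local Notation R := {mpoly F[nvars E]}.
Local Notation u := (@uvert V U).
Local Notation pj := (proj edge U).
Local Notation Sn := {perm 'I_#|U|}.
Definition Aed (i j : 'I_n) (e : E) : bool := pj e == [set u i; u j].
Definition wt (i j : 'I_n) (e : E) : R :=
  if i == j then var_s F E * var_v F e else var_v F e.
Local Notation T := (tutte_matrix F edge U).

Lemma TE i j : T i j = \sum_(e | Aed i j e) wt i j e.
Proof.
rewrite /tutte_matrix mxE /Aed /wt.
have [->|nij] := eqVneq i j; first by rewrite /= setUid mulr_sumr.
by [].
Qed.

Lemma Tsym i j : T i j = T j i.
Proof.
rewrite !TE; apply: eq_big => e; first by rewrite /Aed setUC.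
by rewrite /wt eq_sym.
Qed.

Lemma m1 : (-1 : R) = 1.
Proof. by apply/esym/eqP; rewrite -addr_eq0 -mulr2n char2. Qed.

Lemma step1 : \det T = \sum_(s : Sn | (s^-1 == s)%g) \prod_i T i (s i).
Proof.
rewrite /determinant.
under eq_bigr => s _ do rewrite m1 expr1n mul1r.
rewrite (bigID (fun s : Sn => (s^-1 == s)%g)) /=.
rewrite [X in _ + X](@sum_cancel2 _ _ (fun s => s^-1)%g) ?addr0 //.
- by move=> s; rewrite invgK eq_sym.
- by move=> s _; rewrite invgK.
- move=> s _; rewrite (reindex_inj (@perm_inj _ s)) /=.
  by apply: eq_bigr => i _; rewrite permK Tsym.
Qed.

Definition fcomp (s : Sn) (f : {ffun 'I_n -> E}) : {ffun 'I_n -> E} :=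
  [ffun i => f (s i)].

Definition W (s : Sn) (f : {ffun 'I_n -> E}) : R := \prod_i wt i (s i) (f i).

Lemma step2 (s : Sn) : (s^-1 == s)%g ->
  \prod_i T i (s i) =
  \sum_(f in family (fun i => Aed i (s i)) | fcomp s f == f) W s f.
Proof.
move=> /eqP si.
have ss i : s (s i) = i by rewrite -{1}si permK.
under eq_bigr => i _ do rewrite TE.
rewrite bigA_distr_big_dep (bigID (fun f => fcomp s f == f)) /=.
rewrite [X in _ + X](@sum_cancel2 _ _ (fcomp s)) ?addr0 //.
- move=> f /andP[/familyP fam nf]; apply/andP; split.
    apply/familyP => i; rewrite ffunE; move: (fam (s i)).
    by rewrite /Aed ss setUC.
  apply: contra nf => /eqP/ffunP H; apply/eqP/ffunP => i.
  by move: (H i); rewrite !ffunE ss => <-.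
- move=> f _; apply/ffunP => i; by rewrite !ffunE ss.
- by move=> f /andP[].
- move=> f _; rewrite /W (reindex_inj (@perm_inj _ s)) /=.
  apply: eq_bigr => i _; rewrite ffunE ss /wt; by rewrite eq_sym.
Qed.


Lemma u_inj : injective u.
Proof. exact: enum_val_inj. Qed.

Lemma u_in i : u i \in U.
Proof. exact: enum_valP. Qed.

Lemma u_surj x : x \in U -> exists k, u k = x.
Proof. by move=> Ux; exists (enum_rank_in Ux x); rewrite /uvert enum_rankK_in. Qed.

Lemma pjU e : pj e \subset U.
Proof. exact: subsetIr. Qed.

Lemma set2_eq (a b c : V) : [set a; b] = [set a; c] -> b = c.
Proof.
move=> H; have : b \in [set a; c] by rewrite -H set22.
rewrite in_set2 => /orP[/eqP ba|/eqP //].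
have : c \in [set a; b] by rewrite H set22.
by rewrite ba setUid in_set1 => /eqP ->.
Qed.

Definition Qp (p : Sn * {ffun 'I_n -> E}) : bool :=
  [&& (p.1^-1 == p.1)%g, p.2 \in family (fun i => Aed i (p.1 i)) & fcomp p.1 p.2 == p.2].

Lemma step3 : \det T = \sum_(p | Qp p) W p.1 p.2.
Proof.
rewrite step1 (eq_bigr _ (fun s hs => @step2 s hs)) pair_big_dep.
by apply: eq_bigl => p; rewrite /Qp.
Qed.

Section QFacts.
Variable p : Sn * {ffun 'I_n -> E}.
Hypothesis Qpp : Qp p.
Local Notation s := p.1.
Local Notation f := p.2.

Lemma Q1 i : s (s i) = i.
Proof. by case/and3P: Qpp => /eqP si _ _; rewrite -{1}si permK. Qed.

Lemma Q2 i : pj (f i) = [set u i; u (s i)].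
Proof. by case/and3P: Qpp => _ /familyP/(_ i) /eqP. Qed.

Lemma Q3 i : f (s i) = f i.
Proof. by case/and3P: Qpp => _ _ /eqP/ffunP/(_ i); rewrite ffunE. Qed.

Lemma QK i j : u j \in pj (f i) -> j = i \/ j = s i.
Proof.
rewrite Q2 in_set2 => /orP[/eqP/u_inj ->|/eqP/u_inj ->]; by [left|right].
Qed.

Lemma QK' i j : u j \in pj (f i) -> f j = f i.
Proof. by case/QK => ->; rewrite ?Q3. Qed.

Lemma Qloop i : is_loop edge U (f i) = (i == s i).
Proof.
rewrite /is_loop Q2 cards2 (inj_eq u_inj); by case: (i == s i).
Qed.

End QFacts.
Arguments Q1 [p]. Arguments Q2 [p]. Arguments Q3 [p]. Arguments QK [p] _ [i j]. Arguments QK' [p] _ [i j]. Arguments Qloop [p].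


Definition im (p : Sn * {ffun 'I_n -> E}) : {set E} := [set p.2 i | i in 'I_n].

Lemma QA p : Qp p -> perfect_matching edge U (im p).
Proof.
move=> Q; apply/and3P; split.
- apply/forallP => e; apply/implyP => /imsetP[i _ ->].
  by apply/set0Pn; exists (u i); rewrite (Q2 Q) set21.
- apply/forallP => e1; apply/implyP => /imsetP[i _ ->].
  apply/forallP => e2; apply/implyP => /imsetP[j _ ->].
  apply/implyP => ne; rewrite -setI_eq0; apply/eqP/setP => x.
  rewrite in_set0 inE; apply/negP => /andP[x1 x2].
  have [k uk] := @u_surj x (subsetP (pjU _) x x1).
  rewrite -uk in x1 x2.
  by move: ne; rewrite -(QK' Q x1) -(QK' Q x2) eqxx.
- apply/eqP/setP => x; apply/bigcupP/idP.
    by case=> e _ xe; apply: (subsetP (pjU e)).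
  move=> /u_surj[k <-]; exists (p.2 k); first by rewrite imset_f.
  by rewrite (Q2 Q) set21.
Qed.

Lemma QB p q : Qp p -> Qp q -> im p = im q -> p = q.
Proof.
move=> Qp1 Qq eim.
have ef i : p.2 i = q.2 i.
  have : p.2 i \in im q by rewrite -eim imset_f.
  case/imsetP => j _ eij.
  have ui : u i \in pj (q.2 j) by rewrite -eij (Q2 Qp1) set21.
  by rewrite eij (QK' Qq ui).
have es i : p.1 i = q.1 i.
  apply: u_inj; apply: (@set2_eq (u i)).
  by rewrite -(Q2 Qp1) -(Q2 Qq) ef.
case: p q Qp1 Qq eim ef es => [s f] [t g] /= _ _ _ ef es.
by congr pair; [apply/permP | apply/ffunP].
Qed.


Lemma uniqM M : perfect_matching edge U M ->
  forall e1 e2 x, e1 \in M -> e2 \in M -> x \in pj e1 -> x \in pj e2 -> e1 = e2.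
Proof.
case/and3P=> _ /forallP Pd _ e1 e2 x m1 m2 x1 x2.
apply/eqP; apply: contraT => ne.
move: (Pd e1); rewrite m1 /= => /forallP/(_ e2); rewrite m2 ne /= => dis.
by move: (disjointFr dis x1); rewrite x2.
Qed.

Lemma pj2 e i : u i \in pj e -> exists j, pj e = [set u i; u j].
Proof.
move=> ui.
have : (#|pj e| = 1 \/ #|pj e| = 2)%N.
  move: (small e); rewrite (cardsD1 (u i)) ui.
  case: #|pj e :\ u i| => [|[|]] //=; by [left|right].
case=> [/eqP/cards1P[x ex] | c2].
  by exists i; rewrite setUid ex; move: ui; rewrite ex in_set1 => /eqP ->.
move: c2; rewrite (cardsD1 (u i)) ui => -[/eqP/cards1P[y ey]].
have : y \in pj e by move: (setD1K ui); rewrite ey => <-; rewrite set22.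
move=> /(subsetP (pjU e)) /u_surj[j uj]; exists j.
by rewrite -(setD1K ui) ey uj.
Qed.

Lemma QC M : perfect_matching edge U M -> exists p, Qp p && (im p == M).
Proof.
move=> PM; have uM := @uniqM M PM.
case/and3P: PM => /forallP P0 _ /eqP Pc.
have ex1 i : exists e, (e \in M) && (u i \in pj e).
  have : u i \in \bigcup_(e in M) pj e by rewrite Pc u_in.
  by case/bigcupP=> e me ue; exists e; rewrite me ue.
have [f0 Hf0] := fin_all_exists ex1.
pose f := [ffun i => f0 i].
have fM i : f i \in M by rewrite ffunE; case/andP: (Hf0 i).
have fu i : u i \in pj (f i) by rewrite ffunE; case/andP: (Hf0 i).
have ex2 i : exists j, pj (f i) = [set u i; u j] by apply: pj2.
have [s0 Hs0] := fin_all_exists ex2.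
have fs i : f (s0 i) = f i.
  apply: (uM _ _ (u (s0 i))); rewrite ?fM ?fu //.
  by rewrite Hs0 set22.
have ss i : s0 (s0 i) = i.
  apply: u_inj; apply: (@set2_eq (u (s0 i))).
  transitivity (pj (f i)); first by rewrite -Hs0 fs.
  by rewrite Hs0 setUC.
pose s := perm (can_inj ss).
have sE i : s i = s0 i by rewrite permE.
exists (s, f); apply/andP; split.
  apply/and3P; split => /=.
  - apply/eqP/permP => i; apply: (@perm_inj _ s).
    by rewrite permKV !sE ss.
  - by apply/familyP => i; rewrite -topredE /= /Aed sE Hs0.
  - by apply/eqP/ffunP => i; rewrite ffunE sE fs.
apply/eqP/setP => e; apply/imsetP/idP.
  by case=> i _ ->.
move=> eM; move: (P0 e); rewrite eM /= => /set0Pn[x xe].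
have [k uk] := @u_surj x (subsetP (pjU e) x xe).
exists k => //; apply: (uM _ _ x); rewrite ?fM // -uk ?fu //.
Qed.


Definition weight (M : {set E}) : R :=
  var_s F E ^+ nloops edge U M * \prod_(e in M) var_v F e ^+ pexp edge U e.

Lemma QD p : Qp p -> W p.1 p.2 = weight (im p).
Proof.
move=> Q.
rewrite /W /weight.
have wE i : wt i (p.1 i) (p.2 i) =
    (if i == p.1 i then var_s F E else 1) * var_v F (p.2 i).
  by rewrite /wt; case: (i == p.1 i); rewrite ?mul1r.
rewrite (eq_bigr _ (fun i _ => wE i)) big_split /=.
congr (_ * _).
  rewrite -big_mkcond /= (eq_bigl (fun i => i \in [set i | i == p.1 i])) ?prodr_const; last by move=> i; rewrite inE.
  congr (_ ^+ _); rewrite /nloops.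
  have -> : [set e in im p | is_loop edge U e] = p.2 @: [set i | i == p.1 i].
    apply/setP => e; rewrite inE; apply/andP/imsetP.
      case=> /imsetP[i _ ->]; rewrite (Qloop Q) => fi.
      by exists i; rewrite ?inE.
    case=> i; rewrite inE => fi ->; split; first by rewrite imset_f.
    by rewrite (Qloop Q).
  rewrite card_in_imset //.
  move=> i j; rewrite !inE => /eqP fi /eqP fj eij.
  have : u i \in pj (p.2 j) by rewrite -eij (Q2 Q) set21.
  by case/(QK Q) => // ->.
rewrite (partition_big (fun i => p.2 i) (mem (im p))) /=; last first.
  by move=> i _; apply: imset_f.
apply: eq_bigr => e /imsetP[j _ ->].
rewrite (eq_bigr (fun _ => var_v F (p.2 j))); last by move=> i /eqP ->.
rewrite prodr_const; congr (_ ^+ _).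
rewrite (@eq_card _ _ [set j; p.1 j]); last first.
  move=> i; rewrite in_set2 -topredE /=; apply/idP/idP.
    move=> /eqP eij.
    have : u i \in pj (p.2 j) by rewrite -eij (Q2 Q) set21.
    by case/(QK Q) => ->; rewrite eqxx ?orbT.
  by case/orP=> /eqP ->; rewrite ?(Q3 Q); apply/eqP.
rewrite cards2 /pexp (Qloop Q); by case: (j == p.1 j).
Qed.

End Main.

Section Final.
Variables (F : comNzRingType) (V E : finType) (edge : E -> {set V}) (U : {set V}).
Hypothesis char2 : (2%:R : {mpoly F[nvars E]}) = 0.
Hypothesis small : forall e, (#|proj edge U e| <= 2)%N.

Lemma main_eq : \det (tutte_matrix F edge U) =
  \sum_(M : {set E} | perfect_matching edge U M) @weight F V E edge U M.
Proof.
rewrite (@step3 F V E edge U char2) (eq_bigr _ (fun p hp => @QD F V E edge U p hp)).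
rewrite (partition_big (@im V E U) (fun M => perfect_matching edge U M)); last first.
  by move=> p hp; apply: QA.
apply: eq_bigr => M PM.
have [p0 /andP[Q0 /eqP e0]] := @QC _ _ _ _ small M PM.
rewrite (big_pred1 p0); first by rewrite e0.
move=> q /=; apply/andP/eqP => [[Qq /eqP eq]| ->].
  by apply: QB Qq Q0 _; rewrite eq e0.
by rewrite Q0 e0.
Qed.
End Final.

Theorem lemma4p2 (F : finFieldType) (m : nat) (V E : finType)
    (edge : E -> {set V}) (k : nat) (U : {set V}) :
  (0 < m)%N -> #|F| = (2 ^ m)%N ->
  (forall e : E, #|edge e| = k) ->
  (forall e : E, (#|edge e :&: U| <= 2)%N) ->
  \det (tutte_matrix F edge U) =
  \sum_(M : {set E} | perfect_matching edge U M)
     var_s F E ^+ nloops edge U M *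
     \prod_(e in M) var_v F e ^+ pexp edge U e.
Proof.
move=> _ hF _ hs.
have c2 : 2 \in [pchar F] by apply: (card_finPcharP hF).
have h2 : (2%:R : {mpoly F[nvars E]}) = 0.
  by rewrite -mpolyC_nat (pcharf0 c2) mpolyC0.
exact: (@main_eq F V E edge U h2 hs).
Qed.
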